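(* Assume $q>2$. For every integer $d\ge1$, $$\operatorname{BG}_{q^d-2}=-\sum_{d\ge i>j\ge0}\frac{b_i(\theta^{q^d})}{l_i\,l_j}.$$
   Context: $A=\mathbb{F}_q[\theta]$, $A^+(k)$ the monic polynomials of degree $k$. For an integer $n\ge0$, $\operatorname{BG}_n=\sum_{k\ge0}\sum_{a\in A^+(k)}a^{n}\in A$ (the inner sums vanish for all sufficiently large $k$, so this is a finite sum). $l_0=1$, $l_i=(\theta-\theta^{q^i})l_{i-1}$ for $i\ge1$; $b_0(Y)=1$, $b_i(Y)=\prod_{k=0}^{i-1}(Y-\theta^{q^k})$ for $i\ge1$, evaluated at $Y=\theta^{q^d}$. *)

(* Defs.v *)
From HB Require Import structures.
From mathcomp Require Import all_boot all_order all_algebra.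
Set Implicit Arguments. Unset Strict Implicit. Unset Printing Implicit Defensive.
Import GRing.Theory.
Local Open Scope ring_scope.

(* A = F[theta] is {poly F}, theta = 'X, F a finite field with q = #|F| elements. *)

(* The monic polynomial of degree k with lower coefficients c. Every monic
   polynomial of degree k arises exactly once as c ranges over {ffun 'I_k -> F}. *)
Definition monic_of (F : finFieldType) (k : nat) (c : {ffun 'I_k -> F}) : {poly F} :=
  'X^k + \sum_(i < k) (c i)%:P * 'X^i.

Definition Sk (F : finFieldType) (k n : nat) : {poly F} :=
  \sum_(c : {ffun 'I_k -> F}) (monic_of c) ^+ n.

(* Partial sum sum_{k=0}^{K} S_k(n); BG_n is its eventual (stable) value. *)
Definition BG_partial (F : finFieldType) (n K : nat) : {poly F} :=
  \sum_(k < K.+1) Sk F k n.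

Definition carlitz_l (F : finFieldType) (i : nat) : {poly F} :=
  \prod_(1 <= m < i.+1) ('X - 'X^(#|F| ^ m)).

Definition carlitz_b (F : finFieldType) (i d : nat) : {poly F} :=
  \prod_(k < i) ('X^(#|F| ^ d) - 'X^(#|F| ^ k)).

Notation "x %:F" := (@FracField.tofrac _ x) : ring_scope.

(* Main.v *)
Require Import Defs.
From HB Require Import structures.
From mathcomp Require Import all_boot all_order all_algebra.
From mathcomp Require Import zify ring.
From mathcomp Require fingroup pgroup abelian finfield.
Set Implicit Arguments. Unset Strict Implicit. Unset Printing Implicit Defensive.
Import GRing.Theory.
Local Open Scope ring_scope.



Lemma char_nat (F : finFieldType) :
  exists2 p, p \in [pchar F] & p.-nat #|F|.
Proof.
have [p pr pch] := (finfield.finPcharP F).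
exists p => //.
have := abelian.abelem_pgroup (abelian.fin_ring_pchar_abelem pch).
by rewrite /pgroup.pgroup cardsT.
Qed.

Lemma natq0 (F : finFieldType) : (#|F|%:R : F) = 0.
Proof.
have [p pch pn] := char_nat F.
have [k hk] := p_natP pn.
apply/eqP; rewrite -(dvdn_pcharf pch) hk.
case: k hk => [|k] hk; last by rewrite expnS dvdn_mulr.
by have := card_finNzRing_gt1 F; rewrite hk.
Qed.

Lemma frobD (F : finFieldType) (x y : {poly F}) :
  (x + y) ^+ #|F| = x ^+ #|F| + y ^+ #|F|.
Proof.
have [p pch pn] := char_nat F.
apply: exprDn_pchar.
have e : [pchar {poly F}] =i (p : nat_pred).
  move=> r; rewrite pchar_poly; exact: (pcharf_eq pch).
by rewrite (eq_pnat _ e).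
Qed.

Lemma frob_comp (F : finFieldType) (a : {poly F}) : a ^+ #|F| = a \Po 'X^#|F|.
Proof.
elim/poly_ind: a => [|a c IH]; first by rewrite comp_poly0 expr0n /= eqn0Ngt (ltnW (card_finNzRing_gt1 F)).
rewrite frobD exprMn IH comp_polyD comp_polyM comp_polyX comp_polyC -rmorphXn /= finfield.expf_card.
by [].
Qed.

Lemma compXn (R : comNzRingType) (n : nat) (q : {poly R}) : 'X^n \Po q = q ^+ n.
Proof.
elim: n => [|n IH]; first by rewrite !expr0 comp_polyC.
by rewrite !exprS comp_polyM comp_polyX IH.
Qed.

Lemma frob_compn (F : finFieldType) (m : nat) (a : {poly F}) :
  a ^+ (#|F| ^ m) = a \Po 'X^(#|F| ^ m).
Proof.
elim: m a => [|m IH] a; first by rewrite expn0 expr1 comp_polyXr.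
rewrite expnSr exprM IH frob_comp -comp_polyA compXn.
by rewrite -exprM mulnC.
Qed.



Definition pc (F : finFieldType) (k : nat) (c : {ffun 'I_k -> F}) : {poly F} :=
  \sum_(i < k) (c i)%:P * 'X^i.

Lemma monic_ofE (F : finFieldType) k (c : {ffun 'I_k -> F}) :
  monic_of c = 'X^k + pc c.
Proof. by []. Qed.

Lemma pcD (F : finFieldType) k (c1 c2 : {ffun 'I_k -> F}) :
  pc (c1 + c2) = pc c1 + pc c2.
Proof.
rewrite /pc -big_split /=; apply: eq_bigr => i _.
by rewrite ffunE polyCD mulrDl.
Qed.

Lemma pcZ (F : finFieldType) k (t : F) (c : {ffun 'I_k -> F}) :
  pc [ffun i => t * c i] = t *: pc c.
Proof.
rewrite /pc scaler_sumr; apply: eq_bigr => i _.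
by rewrite ffunE polyCM -mulrA mul_polyC.
Qed.

Lemma coef_pc (F : finFieldType) k (c : {ffun 'I_k -> F}) (i : 'I_k) :
  (pc c)`_i = c i.
Proof.
rewrite /pc coef_sum (bigD1 i) //= coefCM coefXn eqxx mulr1 big1 ?addr0 //.
move=> j ji; rewrite coefCM coefXn.
by rewrite eq_sym (inj_eq val_inj) (negbTE ji) mulr0.
Qed.

Lemma size_pc (F : finFieldType) k (c : {ffun 'I_k -> F}) : (size (pc c) <= k)%N.
Proof.
rewrite /pc; apply: (leq_trans (size_sum _ _ _)).
apply/bigmax_leqP => i _.
apply: (leq_trans (size_polyMleq _ _)).
rewrite size_polyXn size_polyC.
have := ltn_ord i; case: (c i != 0) => /= h; lia.
Qed.

Lemma pc_inj (F : finFieldType) k : injective (@pc F k).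
Proof.
move=> c1 c2 e; apply/ffunP => i.
by rewrite -!coef_pc e.
Qed.

Definition ext (F : finFieldType) k (p : F * {ffun 'I_k -> F}) : {ffun 'I_k.+1 -> F} :=
  [ffun i : 'I_k.+1 => oapp p.2 p.1 (insub (val i))].

Definition unext (F : finFieldType) k (c : {ffun 'I_k.+1 -> F}) : F * {ffun 'I_k -> F} :=
  (c ord_max, [ffun j : 'I_k => c (widen_ord (leqnSn k) j)]).

Lemma ext_widen (F : finFieldType) k p (j : 'I_k) :
  @ext F k p (widen_ord (leqnSn k) j) = p.2 j.
Proof.
rewrite ffunE /=; case: insubP => [j' _ e|]; last by rewrite ltn_ord.
by congr (p.2 _); apply: val_inj.
Qed.

Lemma ext_max (F : finFieldType) k p : @ext F k p ord_max = p.1.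
Proof. by rewrite ffunE /=; case: insubP => [j' |] //=; rewrite ltnn. Qed.

Lemma pc_ext (F : finFieldType) k p : pc (@ext F k p) = pc p.2 + p.1 *: 'X^k.
Proof.
rewrite /pc big_ord_recr /= ext_max mul_polyC; congr (_ + _).
by apply: eq_bigr => j _; rewrite ext_widen.
Qed.

Lemma ext_bij (F : finFieldType) k : bijective (@ext F k).
Proof.
exists (@unext F k).
  case=> t c; rewrite /unext ext_max; congr (_, _); apply/ffunP => j.
  by rewrite ffunE ext_widen.
move=> c; apply/ffunP => i; rewrite ffunE /=.
case: insubP => [j _ e|] /=.
  by rewrite ffunE; congr (c _); apply: val_inj.
move=> h; have e : nat_of_ord i = k by have := ltn_ord i; lia.
by congr (c _); apply: val_inj.
Qed.

Lemma split_sum (F : finFieldType) k (R : nmodType) (f : {poly F} -> R) :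
  \sum_(c : {ffun 'I_k.+1 -> F}) f (pc c) =
  \sum_(t : F) \sum_(c : {ffun 'I_k -> F}) f (pc c + t *: 'X^k).
Proof.
rewrite pair_big /= (reindex (@ext F k)); last first.
  by apply: onW_bij; exact: ext_bij.
by apply: eq_bigr => p _; rewrite pc_ext.
Qed.

Lemma shift_sum (F : finFieldType) k n (c0 : {ffun 'I_k -> F}) :
  \sum_(c : {ffun 'I_k -> F}) (pc c0 + pc c) ^+ n =
  \sum_(c : {ffun 'I_k -> F}) (pc c) ^+ n.
Proof.
rewrite [RHS](reindex_inj (addrI c0)) /=.
by apply: eq_bigr => c _; rewrite pcD.
Qed.

Definition Pk (F : finFieldType) k n : {poly {poly F}} :=
  \sum_(c : {ffun 'I_k -> F}) ('X + (pc c)%:P) ^+ n.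

Lemma PkE (F : finFieldType) k n x :
  (Pk F k n).[x] = \sum_(c : {ffun 'I_k -> F}) (x + pc c) ^+ n.
Proof.
rewrite /Pk horner_sum; apply: eq_bigr => c _.
by rewrite !hornerE.
Qed.

Lemma Pk_const (F : finFieldType) k n : (n < #|F| ^ k)%N ->
  Pk F k n = ((Pk F k n).[0])%:P.
Proof.
move=> hn; apply/eqP; rewrite -subr_eq0.
set g := _ - _.
case: (eqVneq g 0) => // g0; exfalso.
have := max_poly_roots g0 (rs := map (@pc F k) (enum {ffun 'I_k -> F})).
rewrite map_inj_uniq ?enum_uniq; last exact: pc_inj.
rewrite size_map -cardE card_ffun card_ord.
have -> : all (root g) [seq pc c | c <- enum {ffun 'I_k -> F}].
  apply/allP => y /mapP [c0 _ ->].
  rewrite /root /g hornerD hornerN hornerC !PkE shift_sum.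
  by rewrite subr_eq0; apply/eqP; apply: eq_bigr => c _; rewrite add0r.
move=> /(_ isT isT).
have : (size g <= n.+1)%N.
  rewrite /g; apply: (leq_trans (size_polyD _ _)); rewrite geq_max; apply/andP; split.
    rewrite /Pk; apply: (leq_trans (size_sum _ _ _)); apply/bigmax_leqP => c _.
    have -> : 'X + (pc c)%:P = 'X - (- pc c)%:P by rewrite polyCN opprK.
    by rewrite size_exp_XsubC.
  by rewrite size_polyN size_polyC; case: (_ != 0).
move=> h1 h2; have := leq_trans h2 (leq_trans h1 hn); by rewrite ltnn.
Qed.

Lemma natq0P (F : finFieldType) : (#|F|%:R : {poly F}) = 0.
Proof. by rewrite -polyC_natr natq0. Qed.

Lemma natq0PP (F : finFieldType) : (#|F|%:R : {poly {poly F}}) = 0.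
Proof. by rewrite -polyC_natr natq0P. Qed.

Lemma Pk_eval (F : finFieldType) k n x y : (n < #|F| ^ k)%N ->
  (Pk F k n).[x] = (Pk F k n).[y].
Proof. by move=> h; rewrite Pk_const // !hornerC. Qed.

Lemma V1 (F : finFieldType) k m x : (1 <= m <= k)%N ->
  \sum_(c : {ffun 'I_k -> F}) (x + pc c) ^+ (#|F| ^ m - 2) = 0.
Proof.
case/andP=> m1 mk.
have q1 := card_finNzRing_gt1 F.
have hn : (#|F| ^ m - 1 < #|F| ^ k)%N.
  have : (#|F| ^ m <= #|F| ^ k)%N by rewrite leq_exp2l // ltnW.
  have : (0 < #|F| ^ m)%N by rewrite expn_gt0 ltnW.
  lia.
have hd := Pk_const hn.
have : (Pk F k (#|F| ^ m - 1))^`() = 0 by rewrite hd derivC.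
rewrite /Pk linear_sum /=.
under eq_bigr do rewrite deriv_exp derivD derivX derivC addr0 mul1r.
rewrite sumrMnl -mulr_natr.
have -> : ((#|F| ^ m - 1)%:R : {poly {poly F}}) = -1.
  rewrite natrB ?expn_gt0 ?(ltnW q1) // natrX natq0PP expr0n /=.
  have -> : (m == 0%N) = false by case: (m) m1.
  by rewrite sub0r.
rewrite mulrN1 => /eqP; rewrite oppr_eq0 => /eqP /(congr1 (horner^~ x)).
rewrite horner_sum horner0 => h; apply: (etrans _ h); apply: eq_bigr => c _.
have -> : (#|F| ^ m - 1).-1 = (#|F| ^ m - 2)%N by lia.
by rewrite !hornerE.
Qed.

Lemma V2 (F : finFieldType) k m x : (1 <= m <= k)%N ->
  \sum_(c : {ffun 'I_k.+1 -> F}) (x + pc c) ^+ (#|F| ^ m - 1) = 0.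
Proof.
case/andP=> m1 mk.
have q1 := card_finNzRing_gt1 F.
have hn : (#|F| ^ m - 1 < #|F| ^ k)%N.
  have : (#|F| ^ m <= #|F| ^ k)%N by rewrite leq_exp2l // ltnW.
  have : (0 < #|F| ^ m)%N by rewrite expn_gt0 ltnW.
  lia.
rewrite (split_sum k (fun b => (x + b) ^+ (#|F| ^ m - 1))).
rewrite (eq_bigr (fun t => (Pk F k (#|F| ^ m - 1)).[0])); last first.
  move=> t _; rewrite -(Pk_eval (x + t *: 'X^k) 0 hn) PkE.
  by apply: eq_bigr => c _; rewrite (addrC (pc c)) addrA.
by rewrite sumr_const -mulr_natr natq0P mulr0.
Qed.



Lemma Ylemma (R : fieldType) (f : {poly R}) (zs : seq R) :
  uniq zs -> (size f <= (size zs).+1)%N -> all (root f) zs ->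
  f = f`_(size zs) *: \prod_(z <- zs) ('X - z%:P).
Proof.
move=> uz sf rf.
set P := \prod_(z <- zs) _.
have mP : P \is monic by apply: monic_prod_XsubC.
have sP : size P = (size zs).+1 by rewrite size_prod_XsubC.
apply/eqP; rewrite -subr_eq0; set g := _ - _; apply/eqP.
have cg : g`_(size zs) = 0.
  rewrite /g coefB coefZ.
  have -> : P`_(size zs) = 1 by move/monicP: mP; rewrite /lead_coef sP.
  by rewrite mulr1 subrr.
have sg : (size g <= size zs)%N.
  have : (size g <= (size zs).+1)%N.
    apply: (leq_trans (size_polyD _ _)); rewrite geq_max sf size_polyN.
    by apply: (leq_trans (size_scale_leq _ _)); rewrite sP.
  rewrite leq_eqVlt ltnS => /orP [/eqP e|//].
  have : lead_coef g = 0 by rewrite /lead_coef e.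
  by move/eqP; rewrite lead_coef_eq0 => /eqP ->; rewrite size_poly0.
case: (eqVneq g 0) => // g0.
have := max_poly_roots g0 _ uz.
have -> : all (root g) zs.
  apply/allP => z zin; rewrite /root /g hornerD hornerN hornerZ.
  have -> : f.[z] = 0 by apply/eqP; exact: (allP rf).
  rewrite /P horner_prod (bigD1_seq z) //= hornerD hornerN hornerX hornerC subrr.
  by rewrite mul0r mulr0 subrr.
by move=> /(_ isT); rewrite ltnNge sg.
Qed.

Notation K F := {fraction {poly F}}.

Definition liftK (F : finFieldType) (a : {poly F}) : {poly K F} :=
  map_poly (@tofrac _ \o polyC) a.

Lemma liftK_eval (F : finFieldType) (a y : {poly F}) :
  (liftK a).[y%:F] = (a \Po y)%:F.
Proof.
rewrite /liftK /comp_poly -horner_map /=; congr (_.[_]).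
by rewrite -map_poly_comp.
Qed.

Definition node (F : finFieldType) (m : nat) : K F := ('X^(#|F| ^ m) : {poly F})%:F.

Lemma liftK_node (F : finFieldType) (a : {poly F}) m :
  (liftK a).[node F m] = (a ^+ (#|F| ^ m))%:F.
Proof. by rewrite /node liftK_eval -frob_compn. Qed.

Lemma liftK_X (F : finFieldType) (a : {poly F}) :
  (liftK a).[('X : {poly F})%:F] = a%:F.
Proof. by rewrite liftK_eval comp_polyXr. Qed.

Lemma size_liftK (F : finFieldType) (a : {poly F}) : size (liftK a) = size a.
Proof. by rewrite /liftK size_map_poly. Qed.

Lemma coef_liftK (F : finFieldType) (a : {poly F}) i :
  (liftK a)`_i = ((a`_i)%:P)%:F.
Proof. by rewrite /liftK coef_map. Qed.

Definition zs (F : finFieldType) k : seq (K F) := [seq node F m | m <- iota 1 k].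

Lemma zs_uniq (F : finFieldType) k : uniq (zs F k).
Proof.
rewrite map_inj_uniq ?iota_uniq // => a b; rewrite /node => /eqP.
rewrite tofrac_eq => /eqP e.
have := f_equal (fun p : {poly F} => size p) e; rewrite /= !size_polyXn => -[].
by apply: expnI; exact: card_finNzRing_gt1.
Qed.

Lemma prod_zs (F : finFieldType) k (w : {poly F}) :
  (\prod_(z <- zs F k) ('X - z%:P)).[w%:F] =
  (\prod_(1 <= m < k.+1) (w - 'X^(#|F| ^ m)))%:F.
Proof.
rewrite horner_prod big_map rmorph_prod /index_iota subSS subn0.
by apply: eq_bigr => m _; rewrite !hornerE /node rmorphB.
Qed.

Lemma size_monic_of (F : finFieldType) k (c : {ffun 'I_k -> F}) :
  size (monic_of c) = k.+1.
Proof.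
rewrite monic_ofE size_polyDl size_polyXn //.
by apply: leq_ltn_trans (size_pc c) _.
Qed.

Lemma monic_of_neq0 (F : finFieldType) k (c : {ffun 'I_k -> F}) : monic_of c != 0.
Proof. by rewrite -size_poly_eq0 size_monic_of. Qed.

Lemma XsubXn_neq0 (F : finFieldType) m : (1 <= m)%N ->
  ('X - 'X^(#|F| ^ m) : {poly F}) != 0.
Proof.
move=> m1; rewrite subr_eq0; apply/eqP => /(f_equal (fun p : {poly F} => size p)).
rewrite size_polyX size_polyXn => -[] /esym.
have q1 := card_finNzRing_gt1 F.
have : (#|F| ^ 1 <= #|F| ^ m)%N by rewrite leq_exp2l // ltnW.
rewrite expn1 => h1 h2; have h3 : (#|F| ^ m = 1)%N by rewrite h2.
by move: h1; rewrite h3 leqNgt q1.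
Qed.

Lemma carlitz_l_neq0 (F : finFieldType) k : carlitz_l F k != 0.
Proof.
rewrite /carlitz_l prodf_seq_neq0; apply/allP => m.
rewrite mem_index_iota => /andP [m1 _] /=.
exact: XsubXn_neq0.
Qed.

Lemma size_mulCle (R : idomainType) (p : {poly R}) (c : R) :
  (size (p * c%:P)%R <= size p)%N.
Proof.
apply: (leq_trans (size_polyMleq _ _)); rewrite size_polyC.
by case: (c != 0); rewrite ?addn1 ?addn0 ?leq_pred.
Qed.

Definition Gk (F : finFieldType) k : {poly K F} :=
  \sum_(c : {ffun 'I_k -> F}) liftK (monic_of c) * ((((monic_of c)%:F)^-1)^+2)%:P.

Definition lam (F : finFieldType) k : K F :=
  \sum_(c : {ffun 'I_k -> F}) ((monic_of c)%:F)^-1.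

Lemma size_Gk (F : finFieldType) k : (size (Gk F k) <= k.+1)%N.
Proof.
apply: (leq_trans (size_sum _ _ _)); apply/bigmax_leqP => c _.
by apply: (leq_trans (size_mulCle _ _)); rewrite size_liftK size_monic_of.
Qed.

Lemma Gk_X (F : finFieldType) k : (Gk F k).[('X : {poly F})%:F] = lam F k.
Proof.
rewrite /Gk horner_sum; apply: eq_bigr => c _.
have nz : (monic_of c)%:F != 0 by rewrite tofrac_eq0 monic_of_neq0.
by rewrite hornerM hornerC liftK_X expr2 mulrA mulfV // mul1r.
Qed.

Lemma pow_div (R : fieldType) (a : R) n : a != 0 -> (2 <= n)%N ->
  a ^+ n * (a^-1) ^+ 2 = a ^+ (n - 2).
Proof.
move=> a0 n2; rewrite -{1}(subnK n2) exprD exprVn mulrK //.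
by rewrite unitfE expf_neq0.
Qed.

Lemma Gk_node (F : finFieldType) k m : (1 <= m)%N ->
  (Gk F k).[node F m] = (Sk F k (#|F| ^ m - 2))%:F.
Proof.
move=> m1; rewrite /Gk /Sk horner_sum rmorph_sum; apply: eq_bigr => c _.
have nz : (monic_of c)%:F != 0 by rewrite tofrac_eq0 monic_of_neq0.
rewrite hornerM hornerC liftK_node tofracXn pow_div //; first by rewrite rmorphXn.
have q1 := card_finNzRing_gt1 F.
have : (#|F| ^ 1 <= #|F| ^ m)%N by rewrite leq_exp2l // ltnW.
by rewrite expn1 => h; exact: leq_trans q1 h.
Qed.

Definition Pd (F : finFieldType) k d : {poly F} :=
  \prod_(1 <= m < k.+1) ('X^(#|F| ^ d) - 'X^(#|F| ^ m)).

Lemma ML (F : finFieldType) k d : (1 <= d)%N ->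
  lam F k = ((carlitz_l F k)%:F)^-1 ->
  (Sk F k (#|F| ^ d - 2))%:F = (Pd F k d)%:F / ((carlitz_l F k)%:F) ^+ 2.
Proof.
move=> d1 hl.
have szs : size (zs F k) = k by rewrite size_map size_iota.
have roots : all (root (Gk F k)) (zs F k).
  apply/allP => z /mapP [m]; rewrite mem_iota => /andP [m1 mk] ->.
  rewrite /root Gk_node // /Sk.
  rewrite (eq_bigr (fun c => ('X^k + pc c) ^+ (#|F| ^ m - 2))) //.
  by rewrite V1 ?rmorph0 // m1 -ltnS -add1n.
have Y := Ylemma (zs_uniq F k) (leq_trans (size_Gk F k) _) roots.
rewrite szs in Y; have {Y} Y := Y (leqnn _).
set mu := (Gk F k)`_k in Y.
have e1 := congr1 (horner^~ (('X : {poly F})%:F)) Y.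
have e2 := congr1 (horner^~ (node F d)) Y.
rewrite /= Gk_X hornerZ prod_zs -/(carlitz_l F k) in e1.
rewrite /= Gk_node // hornerZ /node prod_zs -/(Pd F k d) in e2.
rewrite e2; move: e1; rewrite hl => e1.
have l0 : (carlitz_l F k)%:F != 0 by rewrite tofrac_eq0 carlitz_l_neq0.
have -> : mu = ((carlitz_l F k)%:F)^-1 / (carlitz_l F k)%:F.
  by rewrite {1}e1 mulfK.
by rewrite mulrC expr2 invfM mulrA.
Qed.

Lemma natq0K (F : finFieldType) : (#|F|%:R : K F) = 0.
Proof. by rewrite -tofrac1 -tofracMn natq0P tofrac0. Qed.

Lemma natqm1K (F : finFieldType) : ((#|F|.-1)%:R : K F) = -1.
Proof.
have q1 := card_finNzRing_gt1 F.
by rewrite -subn1 natrB ?natq0K ?sub0r // ltnW.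
Qed.

Lemma pc0 (F : finFieldType) k : pc (0 : {ffun 'I_k -> F}) = 0.
Proof. by rewrite /pc big1 // => i _; rewrite ffunE mul0r. Qed.

Lemma pc_eq0 (F : finFieldType) k (c : {ffun 'I_k -> F}) : (pc c == 0) = (c == 0).
Proof.
apply/eqP/eqP => [h|->]; last exact: pc0.
by apply: pc_inj; rewrite h pc0.
Qed.

Definition Hk (F : finFieldType) k : {poly K F} :=
  \sum_(c : {ffun 'I_k.+1 -> F}) liftK (pc c) * (((pc c)%:F)^-1)%:P.

Lemma size_Hk (F : finFieldType) k : (size (Hk F k) <= k.+1)%N.
Proof.
apply: (leq_trans (size_sum _ _ _)); apply/bigmax_leqP => c _.
by apply: (leq_trans (size_mulCle _ _)); rewrite size_liftK size_pc.
Qed.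

Lemma Hk_node (F : finFieldType) k m : (1 <= m <= k)%N -> (Hk F k).[node F m] = 0.
Proof.
move=> hm.
have q1 := card_finNzRing_gt1 F.
have qm : (1 < #|F| ^ m)%N.
  have : (#|F| ^ 1 <= #|F| ^ m)%N by case/andP: hm => m1 _; rewrite leq_exp2l // ltnW.
  by rewrite expn1 => h; exact: leq_trans q1 h.
rewrite /Hk horner_sum.
rewrite (eq_bigr (fun c => (((0 + pc c) ^+ (#|F| ^ m - 1))%:F))).
  by rewrite -rmorph_sum V2 ?rmorph0.
move=> c _; rewrite hornerM hornerC liftK_node add0r.
case: (eqVneq (pc c) 0) => [->|nz].
  rewrite !expr0n /=.
  have -> : ((#|F| ^ m)%N == 0%N) = false by case: (#|F| ^ m)%N qm.
  have -> : ((#|F| ^ m - 1)%N == 0%N) = false by case: (#|F| ^ m)%N qm => // -[].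
  by rewrite !rmorph0 mul0r.
have nzF : (pc c)%:F != 0 by rewrite tofrac_eq0.
rewrite -{1}(subnK (ltnW qm)) addn1 exprS tofracM mulrC mulrA mulVf // mul1r.
by rewrite subn1 tofracXn.
Qed.

Lemma hk_term (F : finFieldType) (b : {poly F}) :
  (liftK b * ((b%:F)^-1)%:P).[('X : {poly F})%:F] = b%:F * (b%:F)^-1.
Proof. by rewrite hornerM hornerC liftK_X. Qed.

Lemma Hk_X (F : finFieldType) k : (Hk F k).[('X : {poly F})%:F] = -1.
Proof.
rewrite /Hk horner_sum.
rewrite (eq_bigr (fun c => (pc c)%:F * ((pc c)%:F)^-1)); last by move=> c _; rewrite hk_term.
rewrite (bigD1 (0 : {ffun 'I_k.+1 -> F})) ?inE //= pc0 rmorph0 mul0r add0r.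
rewrite (eq_bigr (fun _ => 1)); last first.
  move=> c nc; rewrite mulfV // tofrac_eq0 pc_eq0.
  exact: nc.
rewrite sumr_const cardC1 card_ffun card_ord.
have q1 := card_finNzRing_gt1 F.
rewrite -subn1 natrB; last by rewrite expn_gt0 ltnW.
by rewrite natrX natq0K expr0n /= sub0r.
Qed.

Lemma Hk_coef (F : finFieldType) k : (Hk F k)`_k = - lam F k.
Proof.
rewrite /Hk coef_sum.
rewrite (eq_bigr (fun c => (((pc c)`_k)%:P)%:F * ((pc c)%:F)^-1)); last first.
  by move=> c _; rewrite coefMC coef_liftK.
rewrite (split_sum k (fun b => ((b`_k)%:P)%:F * (b%:F)^-1)) /=.
rewrite (bigD1 0) //= big1 ?add0r; last first.
  by move=> c _; rewrite coefD coefZ coefXn eqxx mulr1 nth_default ?size_pc // add0r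
    rmorph0 mul0r.
rewrite (eq_bigr (fun _ => lam F k)); last first.
  move=> t t0.
  have tF : ((t%:P : {poly F})%:F) != 0 by rewrite tofrac_eq0 polyC_eq0.
  pose h (c : {ffun 'I_k -> F}) := [ffun i => t * c i].
  have hinj : injective h.
    move=> c1 c2 /ffunP e; apply/ffunP => i; have := e i; rewrite !ffunE.
    by apply: mulfI.
  rewrite /lam (reindex_inj hinj) /=; apply: eq_bigr => c _.
  rewrite coefD coefZ coefXn eqxx mulr1 nth_default ?size_pc // add0r.
  have -> : pc (h c) + t *: 'X^k = t%:P * monic_of c.
    by rewrite monic_ofE pcZ mulrDr -!mul_polyC addrC.
  by rewrite tofracM invfM mulVKf.
rewrite sumr_const cardC1 -mulr_natr natqm1K mulrN1.
by [].
Qed.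

Lemma norm_lam (F : finFieldType) k : lam F k = ((carlitz_l F k)%:F)^-1.
Proof.
have szs : size (zs F k) = k by rewrite size_map size_iota.
have roots : all (root (Hk F k)) (zs F k).
  apply/allP => z /mapP [m]; rewrite mem_iota => /andP [m1 mk] ->.
  by rewrite /root Hk_node // m1 -ltnS -add1n.
have Y := Ylemma (zs_uniq F k) (leq_trans (size_Hk F k) _) roots.
rewrite szs in Y; have {Y} Y := Y (leqnn _).
have e1 := congr1 (horner^~ (('X : {poly F})%:F)) Y.
rewrite /= Hk_X hornerZ prod_zs -/(carlitz_l F k) Hk_coef in e1.
have l0 : (carlitz_l F k)%:F != 0 by rewrite tofrac_eq0 carlitz_l_neq0.
apply: (mulIf l0); rewrite mulVf //.
by apply: oppr_inj; rewrite e1 mulNr.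
Qed.



Lemma abel (R : comNzRingType) (b u : nat -> R) N :
  \sum_(i < N.+1) b i * \sum_(j < i) u j =
  \sum_(j < N) u j * (\sum_(i < N.+1) b i - \sum_(i < j.+1) b i).
Proof.
elim: N => [|N IH]; first by rewrite big_ord1 big_ord0 mulr0 big_ord0.
have e1 : \sum_(i < N.+2) b i * \sum_(j < i) u j =
   \sum_(i < N.+1) b i * \sum_(j < i) u j + b N.+1 * \sum_(j < N.+1) u j.
  by rewrite big_ord_recr.
have e2 : \sum_(i < N.+2) b i = \sum_(i < N.+1) b i + b N.+1 by rewrite big_ord_recr.
rewrite e1 IH e2.
rewrite [RHS]big_ord_recr /= [in u N * _]addrAC subrr add0r.
under [X in _ = X + _]eq_bigr do rewrite addrAC mulrDr.
rewrite big_split /= -addrA; congr (_ + _).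
rewrite big_ord_recr /= mulrDr mulr_sumr; congr (_ + _); last by rewrite mulrC.
by apply: eq_bigr => i _; rewrite mulrC.
Qed.

Lemma l_rec (F : finFieldType) j :
  carlitz_l F j.+1 = carlitz_l F j * ('X - 'X^(#|F| ^ j.+1)).
Proof. by rewrite /carlitz_l big_nat_recr. Qed.

Lemma Pd_rec (F : finFieldType) j d :
  Pd F j.+1 d = Pd F j d * ('X^(#|F| ^ d) - 'X^(#|F| ^ j.+1)).
Proof. by rewrite /Pd big_nat_recr. Qed.

Lemma b_rec (F : finFieldType) j d :
  carlitz_b F j.+1 d = ('X^(#|F| ^ d) - 'X) * Pd F j d.
Proof.
rewrite /carlitz_b big_ord_recl expn0 expr1; congr (_ * _).
by rewrite /Pd big_add1 /= big_mkord.
Qed.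

Lemma l0E (F : finFieldType) : carlitz_l F 0 = 1.
Proof. by rewrite /carlitz_l /index_iota subnn big_nil. Qed.

Lemma b0E (F : finFieldType) d : carlitz_b F 0 d = 1.
Proof. by rewrite /carlitz_b big_ord0. Qed.

Lemma Pd0E (F : finFieldType) d : Pd F 0 d = 1.
Proof. by rewrite /Pd /index_iota subnn big_nil. Qed.

Lemma tel_step (R : fieldType) (A L Y x z : R) : L != 0 -> x - z != 0 ->
  A / L + (Y - x) * A / (L * (x - z)) = A * (Y - z) / (L * (x - z)).
Proof. by move=> l0 x0; field; rewrite l0 x0. Qed.

Lemma tel (F : finFieldType) d j :
  \sum_(i < j.+1) (carlitz_b F i d)%:F / (carlitz_l F i)%:F =
  (Pd F j d)%:F / (carlitz_l F j)%:F.
Proof.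
elim: j => [|j IH].
  rewrite big_ord1.
  have -> : nat_of_ord (@ord0 0) = 0%N by [].
  by rewrite b0E Pd0E.
rewrite big_ord_recr /= IH b_rec l_rec Pd_rec !tofracM !tofracB.
have l0 : (carlitz_l F j)%:F != 0 by rewrite tofrac_eq0 carlitz_l_neq0.
have x0 : ('X : {poly F})%:F - ('X^(#|F| ^ j.+1))%:F != 0.
  by rewrite -tofracB tofrac_eq0 XsubXn_neq0.
exact: tel_step.
Qed.

Lemma Sk_val (F : finFieldType) k d : (1 <= d)%N ->
  (Sk F k (#|F| ^ d - 2))%:F = (Pd F k d)%:F / ((carlitz_l F k)%:F) ^+ 2.
Proof. by move=> d1; apply: ML => //; exact: norm_lam. Qed.

Lemma Pd_zero (F : finFieldType) k d : (1 <= d <= k)%N -> Pd F k d = 0.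
Proof.
move=> hd; rewrite /Pd (bigD1_seq d) ?iota_uniq //=; last first.
  by rewrite mem_index_iota ltnS.
by rewrite subrr mul0r.
Qed.

Theorem theorem5p1 (F : finFieldType) (d : nat) :
  (2 < #|F|)%N -> (1 <= d)%N ->
  exists N : nat, forall K : nat, (N <= K)%N ->
    (BG_partial F (#|F| ^ d - 2) K)%:F =
    - \sum_(i < d.+1) \sum_(j < i)
        (carlitz_b F i d)%:F / ((carlitz_l F i)%:F * (carlitz_l F j)%:F)
      :> {fraction {poly F}}.
Proof.
move=> _ d1; exists d => K hK.
set u := fun j => ((carlitz_l F j)%:F)^-1 : {fraction {poly F}}.
set be := fun i => (carlitz_b F i d)%:F / (carlitz_l F i)%:F : {fraction {poly F}}.
have R1 : \sum_(i < d.+1) \sum_(j < i)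
        (carlitz_b F i d)%:F / ((carlitz_l F i)%:F * (carlitz_l F j)%:F)
      = \sum_(i < d.+1) be i * \sum_(j < i) u j.
  apply: eq_bigr => i _; rewrite mulr_sumr; apply: eq_bigr => j _.
  by rewrite /be /u invfM mulrA.
rewrite R1 abel.
have hd : \sum_(i < d.+1) be i = 0.
  by rewrite /be tel Pd_zero ?d1 ?leqnn // rmorph0 mul0r.
rewrite hd.
have R2 : forall j, \sum_(i < j.+1) be i = (Pd F j d)%:F / (carlitz_l F j)%:F.
  by move=> j; rewrite /be tel.
under eq_bigr do rewrite R2 sub0r mulrN.
rewrite sumrN opprK.
rewrite /BG_partial rmorph_sum.
rewrite (big_ord_widen K.+1 (fun i => u i * ((Pd F i d)%:F / (carlitz_l F i)%:F)));
  last by apply: (leq_trans hK).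
rewrite [RHS]big_mkcond /=; apply: eq_bigr => i _.
have -> : tofrac (Sk F i (#|F| ^ d - 2)) =
  (Pd F i d)%:F / ((carlitz_l F i)%:F) ^+ 2 by exact: Sk_val.
case: ifP => h; first by rewrite /u expr2 invfM mulrA mulrC.
by rewrite Pd_zero ?rmorph0 ?mul0r // d1 leqNgt h.
Qed.
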